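(* Let $M=(r,q,u)$ be a floor-randomized mechanism. Then there exists a floor-randomized mechanism $\tilde M=(\tilde r,\tilde q,\tilde u)$ satisfying DD such that $\tilde q(\theta)\le q(\theta)$ for all $\theta>\underline\theta$, $\tilde u(\theta)\le u(\theta)$ for all $\theta$, and $\mathrm{RS}_\alpha(\theta,\tilde M)\ge\mathrm{RS}_\alpha(\theta,M)$ for all $\theta$. Moreover, for every $\theta$ with $q(\theta)>q_e(\theta)$ (with $\theta>\underline\theta$ for the first inequality) the inequalities $\tilde q(\theta)<q(\theta)$ and $\mathrm{RS}_\alpha(\theta,\tilde M)>\mathrm{RS}_\alpha(\theta,M)$ are strict, and if $q(\underline\theta)\neq q_e(\underline\theta)$ then $\mathrm{RS}_\alpha(\underline\theta,\tilde M)>\mathrm{RS}_\alpha(\underline\theta,M)$.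
   Context: Setting. Let $\Theta=[\underline\theta,\overline\theta]$ with $0<\underline\theta<\overline\theta$. Let $c>0$ and let $P:\mathbb R_+\to\mathbb R_+$ be continuous and strictly decreasing with $P(\overline q)=0$ for some $\overline q>0$. Put $V(q)=\int_0^q P(z)\,dz$ and $\mathrm{TS}(\theta,q)=V(q)-c-\theta q$ for $q>0$, $\mathrm{TS}(\theta,0)=0$. Assume (A2): $\mathrm{TS}(\overline\theta,P^{-1}(\overline\theta))>0$. A mechanism is a triple $M=(r,q,u)$ of functions $r:\Theta\to[0,1]$, $q:\Theta\to[0,\overline q]$, $u:\Theta\to\mathbb R$ with $q(\theta)=0$ if and only if $r(\theta)=0$. It is IC if $u(\theta)\ge u(\theta')+(\theta'-\theta)q(\theta')r(\theta')$ for all $\theta,\theta'\in\Theta$, and IR if $u(\theta)\ge 0$ for all $\theta$. (Known fact: $M$ is IC iff $\theta\mapsto q(\theta)r(\theta)$ is nonincreasing and $u(\theta)=u(\overline\theta)+\int_\theta^{\overline\theta}q(z)r(z)\,dz$ for all $\theta$; an IC mechanism is IR iff $u(\overline\theta)\ge0$.) Fix $\alpha\in[0,1)$. The regulator's surplus at $\theta$ is $\mathrm{RS}_\alpha(\theta,M)=r(\theta)\,\mathrm{TS}(\theta,q(\theta))-(1-\alpha)u(\theta)$. The quantity floor $\hat q$ is the unique $q>0$ with $V(q)-qP(q)=c$. A mechanism $(r,q,u)$ is floor-randomized if it is IC, IR, $u(\overline\theta)=0$, and $\Theta$ can be partitioned into three pairwise disjoint (possibly empty) intervals $\Theta_1,\Theta_{01},\Theta_0$,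 with every element of $\Theta_0$ larger than every element of $\Theta_{01}$ and every element of $\Theta_{01}$ larger than every element of $\Theta_1$, such that: $q(\theta)\ge\hat q$ and $r(\theta)=1$ for $\theta\in\Theta_1$; $q(\theta)=\hat q$ and $r(\theta)\in(0,1)$ for $\theta\in\Theta_{01}$; $q(\theta)=r(\theta)=0$ for $\theta\in\Theta_0$. The efficient quantity is $q_e(\theta)=P^{-1}(\theta)$. A mechanism satisfies downward distortion (DD) if $q(\theta)\le q_e(\theta)$ for all $\theta$, with equality at $\theta=\underline\theta$. *)

(* Defs.v *)
From Stdlib Require Import Reals Lra.
From Coquelicot Require Import Coquelicot.
Open Scope R_scope.

Definition inTheta (thl thh th : R) : Prop := thl <= th <= thh.

Definition V (P : R -> R) (q : R) : R := RInt P 0 q.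

Definition TS (P : R -> R) (c th q : R) : R :=
  if Rlt_dec 0 q then V P q - c - th * q else 0.

Definition cont_on_Rplus (P : R -> R) : Prop :=
  forall x, 0 <= x ->
    filterlim P (within (fun y => 0 <= y) (locally x)) (locally (P x)).

Definition mechanism (thl thh qbar : R) (r q u : R -> R) : Prop :=
  forall th, inTheta thl thh th ->
    0 <= r th <= 1 /\ 0 <= q th <= qbar /\ (q th = 0 <-> r th = 0).

Definition IC (thl thh : R) (r q u : R -> R) : Prop :=
  forall th th', inTheta thl thh th -> inTheta thl thh th' ->
    u th >= u th' + (th' - th) * q th' * r th'.

Definition IR (thl thh : R) (u : R -> R) : Prop :=
  forall th, inTheta thl thh th -> u th >= 0.

Definition RS (P : R -> R) (c alpha : R) (r q u : R -> R) (th : R) : R :=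
  r th * TS P c th (q th) - (1 - alpha) * u th.

Definition is_interval (S : R -> Prop) : Prop :=
  forall x y z, S x -> S z -> x <= y <= z -> S y.

Definition floor_randomized (thl thh qbar qhat : R) (r q u : R -> R) : Prop :=
  mechanism thl thh qbar r q u /\ IC thl thh r q u /\ IR thl thh u /\
  u thh = 0 /\
  exists S1 S01 S0 : R -> Prop,
    is_interval S1 /\ is_interval S01 /\ is_interval S0 /\
    (forall th, S1 th -> inTheta thl thh th) /\
    (forall th, S01 th -> inTheta thl thh th) /\
    (forall th, S0 th -> inTheta thl thh th) /\
    (forall th, inTheta thl thh th -> S1 th \/ S01 th \/ S0 th) /\
    (forall th, ~ (S1 th /\ S01 th)) /\
    (forall th, ~ (S1 th /\ S0 th)) /\
    (forall th, ~ (S01 th /\ S0 th)) /\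
    (forall x y, S0 x -> S01 y -> y < x) /\
    (forall x y, S01 x -> S1 y -> y < x) /\
    (forall th, S1 th -> q th >= qhat /\ r th = 1) /\
    (forall th, S01 th -> q th = qhat /\ 0 < r th < 1) /\
    (forall th, S0 th -> q th = 0 /\ r th = 0).

(* downward distortion, qe = efficient quantity P^{-1} *)
Definition DD (thl thh : R) (qe : R -> R) (q : R -> R) : Prop :=
  (forall th, inTheta thl thh th -> q th <= qe th) /\ q thl = qe thl.

(* Main.v *)
Require Import Defs.
From Stdlib Require Import Reals Lra List.
From Coquelicot Require Import Coquelicot.
Open Scope R_scope.

Lemma cont_ext (P : R -> R) : cont_on_Rplus P ->
  forall x, continuous (fun y => P (Rmax 0 y)) x.
Proof.
intros HP x.
intros Q [eps Heps].
destruct (HP (Rmax 0 x) (Rmax_l _ _) (fun z => Q z)) as [d Hd].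
{ exists eps. exact Heps. }
exists d. intros y Hy.
apply Hd. 2: apply Rmax_l.
unfold ball in *; simpl in *. unfold AbsRing_ball in *; simpl in *.
unfold abs, minus, plus, opp in *; simpl in *.
apply Rle_lt_trans with (2 := Hy).
unfold Rmax; destruct (Rle_dec 0 y); destruct (Rle_dec 0 x);
 unfold Rabs; repeat destruct Rcase_abs; lra.
Qed.

Lemma exR (P : R -> R) : cont_on_Rplus P ->
  forall a b, 0 <= a -> 0 <= b -> ex_RInt P a b.
Proof.
intros HP a b Ha Hb.
apply ex_RInt_ext with (f := fun y => P (Rmax 0 y)).
- intros x Hx. rewrite Rmax_right; auto.
  assert (0 <= Rmin a b) by (unfold Rmin; destruct Rle_dec; lra). lra.
- apply (@ex_RInt_continuous R_CompleteNormedModule). intros; apply cont_ext; auto.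
Qed.


Lemma Vdiff (P : R -> R) (HP : cont_on_Rplus P) a b : 0 <= a -> 0 <= b -> V P b - V P a = RInt P a b.
Proof.
intros Ha Hb. unfold V.
rewrite <- (RInt_Chasles P 0 a b); try apply (exR P HP); auto; try lra.
unfold plus; simpl. ring.
Qed.

Lemma Ibounds (P : R -> R) (qbar : R) (HP : cont_on_Rplus P) (HPdec : forall x y, 0 <= x -> x < y -> y <= qbar -> P y < P x) a b : 0 <= a -> a <= b -> b <= qbar ->
  (b - a) * P b <= RInt P a b <= (b - a) * P a.
Proof.
intros Ha Hab Hb.
assert (E : ex_RInt P a b) by (apply (exR P HP); auto; lra).
split.
- replace ((b - a) * P b) with (RInt (fun _ => P b) a b).
  2:{ rewrite RInt_const. unfold scal; simpl; unfold mult; simpl. ring. }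
  apply RInt_le; auto. apply ex_RInt_const.
  intros x Hx. left. apply HPdec; lra.
- replace ((b - a) * P a) with (RInt (fun _ => P a) a b).
  2:{ rewrite RInt_const. unfold scal; simpl; unfold mult; simpl. ring. }
  apply RInt_le; auto. apply ex_RInt_const.
  intros x Hx. left. apply HPdec; lra.
Qed.

Lemma Vmono_strict (P : R -> R) (qbar : R) (HP : cont_on_Rplus P) (HPdec : forall x y, 0 <= x -> x < y -> y <= qbar -> P y < P x) a b : 0 <= a -> a < b -> b <= qbar ->
  V P b - V P a < (b - a) * P a /\ V P b - V P a > (b - a) * P b.
Proof.
intros Ha Hab Hb.
set (m := (a + b) / 2).
assert (Hm1 : a < m) by (unfold m; lra). assert (Hm2 : m < b) by (unfold m; lra).
replace (V P b - V P a) with ((V P m - V P a) + (V P b - V P m)) by ring.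
rewrite !(Vdiff P HP) by lra.
destruct (Ibounds P qbar HP HPdec a m) as [A1 A2]; try lra.
destruct (Ibounds P qbar HP HPdec m b) as [B1 B2]; try lra.
assert (P m < P a) by (apply HPdec; lra).
assert (P b < P m) by (apply HPdec; lra).
split; nra.
Qed.

Lemma TSmax (P : R -> R) (qbar : R) (HP : cont_on_Rplus P) (HPdec : forall x y, 0 <= x -> x < y -> y <= qbar -> P y < P x) th e q : 0 < e <= qbar -> P e = th -> 0 < q <= qbar -> q <> e ->
  V P q - th * q < V P e - th * e.
Proof.
intros He HPe Hq Hne.
destruct (Rtotal_order q e) as [Hlt|[Heq|Hgt]].
- destruct (Vmono_strict P qbar HP HPdec q e) as [_ H]; try lra. subst th. nra.
- contradiction.
- destruct (Vmono_strict P qbar HP HPdec e q) as [H _]; try lra. subst th. nra.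
Qed.


Fixpoint chain (thl thh a : R) (l : list R) : Prop :=
  match l with nil => True | p :: l' => a <= p /\ thl <= p <= thh /\ chain thl thh p l' end.
Fixpoint LS (x : R -> R) (a : R) (l : list R) : R :=
  match l with nil => 0 | p :: l' => (p - a) * x p + LS x p l' end.
Definition EE (x : R -> R) (thl thh a v : R) : Prop :=
  exists l, chain thl thh a l /\ v = LS x a l.

Lemma LS_bound (thl thh K : R) (x : R -> R) : 0 <= K ->
  (forall p, inTheta thl thh p -> 0 <= x p <= K) ->
  forall l a, chain thl thh a l -> LS x a l <= Rmax 0 ((thh - a) * K).
Proof.
intros HK Hx. induction l as [|p l IH]; intros a Hc; simpl.
- apply Rmax_l.
- destruct Hc as [H1 [H2 H3]]. specialize (IH p H3).
  rewrite Rmax_right in IH by nra.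
  destruct (Hx p H2). rewrite Rmax_right by nra. nra.
Qed.

Lemma construct_u (thl thh K : R) (x : R -> R) : thl <= thh -> 0 <= K ->
  (forall p, inTheta thl thh p -> 0 <= x p <= K) ->
  (forall p p', inTheta thl thh p -> inTheta thl thh p' -> p <= p' -> x p' <= x p) ->
  exists ut : R -> R,
    (forall a b, inTheta thl thh a -> inTheta thl thh b -> ut a >= ut b + (b - a) * x b) /\
    (forall a, inTheta thl thh a -> ut a >= 0) /\ ut thh = 0 /\
    (forall w : R -> R, (forall a, inTheta thl thh a -> w a >= 0) ->
       (forall a p, inTheta thl thh a -> inTheta thl thh p -> a < p -> w a >= w p + (p - a) * x p) ->
       forall a, inTheta thl thh a -> ut a <= w a).
Proof.
intros Hlh HK Hx Hmono.
assert (Hs : forall a, {m | is_lub (EE x thl thh a) m}).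
{ intro a. apply completeness.
  - exists (Rmax 0 ((thh - a) * K)). intros v [l [Hc ->]].
    eapply LS_bound; eauto.
  - exists 0. exists nil. simpl. auto. }
exists (fun a => proj1_sig (Hs a)).
assert (Hlub : forall a, is_lub (EE x thl thh a) (proj1_sig (Hs a))) by (intro a; exact (proj2_sig (Hs a))).
assert (H0 : forall a, 0 <= proj1_sig (Hs a)).
{ intro a. apply (proj1 (Hlub a)). exists nil. simpl; auto. }
assert (Hin : forall a l, chain thl thh a l -> LS x a l <= proj1_sig (Hs a)).
{ intros a l Hc. apply (proj1 (Hlub a)). exists l; auto. }
assert (Hub : forall a m, (forall l, chain thl thh a l -> LS x a l <= m) -> proj1_sig (Hs a) <= m).
{ intros a m Hm. apply (proj2 (Hlub a)). intros v [l [Hc ->]]. auto. }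
split; [|split; [|split]].
- intros a b Ha Hb.
  destruct (Rle_lt_dec a b) as [Hab|Hab].
  +
    assert (proj1_sig (Hs b) <= proj1_sig (Hs a) - (b - a) * x b); [|lra].
    apply Hub. intros l Hc.
    assert (LS x a (b :: l) <= proj1_sig (Hs a)) by (apply Hin; simpl; auto).
    simpl in H. lra.
  +
    set (c := a).
    assert (Key : forall l b', chain thl thh b' l -> inTheta thl thh b' -> b' <= c ->
              LS x b' l <= (c - b') * x b' + proj1_sig (Hs c)).
    { induction l as [|p l IH]; intros b' Hc Hb' Hbc; simpl.
      - destruct (Hx b' Hb'). specialize (H0 c). nra.
      - destruct Hc as [H1 [H2 H3]].
        destruct (Rle_lt_dec p c) as [Hpc|Hpc].
        + specialize (IH p H3 H2 Hpc). specialize (Hmono b' p Hb' H2 H1). nra.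
        + assert (LS x c (p :: l) <= proj1_sig (Hs c)).
          { apply Hin. simpl. split; [lra|auto]. }
          simpl in H. specialize (Hmono b' p Hb' H2 H1). destruct (Hx p H2). nra. }
    assert (proj1_sig (Hs b) <= proj1_sig (Hs c) + (c - b) * x b); [|unfold c in *; lra].
    apply Hub. intros l Hc. specialize (Key l b Hc Hb). unfold c in *. lra.
- intros a _. specialize (H0 a). lra.
- apply Rle_antisym; [|apply H0].
  apply Hub. intros l.
  assert (forall l a, a = thh -> chain thl thh a l -> LS x a l <= 0).
  { clear. induction l as [|p l IH]; intros a Ha Hc; simpl; [lra|].
    destruct Hc as [H1 [H2 H3]]. assert (Hp : p = thh) by lra.
    specialize (IH p Hp H3). replace (p - a) with 0 by lra. lra. }
  intros; eauto.
- intros w Hw0 Hw a Ha. apply Hub.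
  intro l. revert a Ha. induction l as [|p l IH]; intros a Ha Hc; simpl.
  + specialize (Hw0 a Ha). lra.
  + destruct Hc as [H1 [H2 H3]]. specialize (IH p H2 H3).
    destruct (Req_dec a p) as [E|E].
    * subst. lra.
    * specialize (Hw a p Ha H2 ltac:(lra)). lra.
Qed.



Theorem lemma4
  (thl thh c qbar : R) (P : R -> R) (qe : R -> R) (qhat alpha : R)
  (Hth : 0 < thl < thh) (Hc : 0 < c) (Hqbar : 0 < qbar)
  (HPcont : cont_on_Rplus P)
  (HPnn : forall x, 0 <= x -> 0 <= P x)
  (HPdec : forall x y, 0 <= x -> x < y -> y <= qbar -> P y < P x)
  (HPqbar : P qbar = 0)
  (* qe = P^{-1} on Theta *)
  (Hqe : forall th, inTheta thl thh th -> 0 <= qe th <= qbar /\ P (qe th) = th)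
  (* (A2) *)
  (HA2 : TS P c thh (qe thh) > 0)
  (* quantity floor *)
  (Hqhat : 0 < qhat <= qbar /\ V P qhat - qhat * P qhat = c)
  (Halpha : 0 <= alpha < 1)
  (r q u : R -> R)
  (HM : floor_randomized thl thh qbar qhat r q u) :
  exists rt qt ut : R -> R,
    floor_randomized thl thh qbar qhat rt qt ut /\
    DD thl thh qe qt /\
    (forall th, inTheta thl thh th -> thl < th -> qt th <= q th) /\
    (forall th, inTheta thl thh th -> ut th <= u th) /\
    (forall th, inTheta thl thh th ->
       RS P c alpha rt qt ut th >= RS P c alpha r q u th) /\
    (forall th, inTheta thl thh th -> q th > qe th ->
       (thl < th -> qt th < q th) /\
       RS P c alpha rt qt ut th > RS P c alpha r q u th) /\
    (q thl <> qe thl ->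
       RS P c alpha rt qt ut thl > RS P c alpha r q u thl).
Proof.
destruct HM as (Hmech & HIC & HIR & Huh & S1 & S01 & S0 & I1 & I01 & I0 & D1 & D01 & D0 & Cov
  & N1 & N2 & N3 & O1 & O2 & V1 & V01 & V0).
destruct Hqhat as [[Hqh0 Hqh1] Hqhc].
assert (Thl : inTheta thl thh thl) by (unfold inTheta; lra).
assert (Thh : inTheta thl thh thh) by (unfold inTheta; lra).
assert (TSpos : forall th x, 0 < x -> TS P c th x = V P x - c - th * x).
{ intros th x Hx. unfold TS. destruct (Rlt_dec 0 x); lra. }
assert (TS0 : forall th, TS P c th 0 = 0).
{ intros th. unfold TS. destruct (Rlt_dec 0 0); lra. }
assert (Hqeh : 0 < qe thh).
{ destruct (Rlt_dec 0 (qe thh)) as [h|h]; auto. destruct (Hqe thh Thh).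
  assert (qe thh = 0) by lra. rewrite H1, TS0 in HA2. lra. }
assert (Hqemono : forall a b, inTheta thl thh a -> inTheta thl thh b -> a <= b -> qe b <= qe a).
{ intros a b Ha Hb Hab. destruct (Rle_lt_dec (qe b) (qe a)) as [h|h]; auto.
  destruct (Hqe a Ha), (Hqe b Hb).
  assert (P (qe b) < P (qe a)) by (apply HPdec; lra). lra. }
assert (Hqepos : forall a, inTheta thl thh a -> 0 < qe a).
{ intros a Ha. specialize (Hqemono a thh Ha Thh). unfold inTheta in Ha. lra. }
assert (Hqhqe : qhat <= qe thh).
{ destruct (Rle_lt_dec qhat (qe thh)) as [h|h]; auto.
  destruct (Hqe thh Thh) as [B Pe].
  destruct (Vmono_strict P qbar HPcont HPdec (qe thh) qhat) as [_ W]; try lra.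
  assert (P qhat < P (qe thh)) by (apply HPdec; lra).
  rewrite TSpos in HA2 by lra. nra. }
assert (Hqhqe' : forall a, inTheta thl thh a -> qhat <= qe a).
{ intros a Ha. specialize (Hqemono a thh Ha Thh). unfold inTheta in Ha. lra. }
assert (HTSqe : forall a, inTheta thl thh a -> TS P c a (qe a) > 0).
{ intros a Ha. rewrite TSpos by auto. rewrite TSpos in HA2 by auto.
  destruct (Hqe a Ha) as [B Pe]. destruct (Hqe thh Thh) as [B' Pe'].
  destruct (Req_dec (qe thh) (qe a)) as [E|E].
  - rewrite <- E. unfold inTheta in Ha. nra.
  - pose proof (TSmax P qbar HPcont HPdec a (qe a) (qe thh) ltac:(specialize (Hqepos a Ha); lra) Pe ltac:(lra) E).
    unfold inTheta in Ha. nra. }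
assert (Hxmono : forall a b, inTheta thl thh a -> inTheta thl thh b -> a <= b -> q b * r b <= q a * r a).
{ intros a b Ha Hb Hab. destruct (Req_dec a b) as [E|E]; [subst; lra|].
  pose proof (HIC a b Ha Hb). pose proof (HIC b a Hb Ha). nra. }
assert (O3 : forall x y, S0 x -> S1 y -> y < x).
{ intros x y Hx Hy. destruct (Rle_lt_dec x y) as [h|h]; auto.
  pose proof (Hxmono x y (D0 x Hx) (D1 y Hy) h). destruct (V0 x Hx), (V1 y Hy). nra. }
assert (Hcl : forall p, inTheta thl thh p ->
   (S1 p /\ q p >= qhat /\ r p = 1) \/ (q p <= qe p /\ 0 <= r p <= 1 /\ 0 <= q p)).
{ intros p Hp. destruct (Cov p Hp) as [h|[h|h]].
  - left. destruct (V1 p h). auto.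
  - right. destruct (V01 p h). specialize (Hqhqe' p Hp). lra.
  - right. destruct (V0 p h). specialize (Hqepos p Hp). lra. }
set (qt := fun th => if Req_EM_T th thl then qe thl else Rmin (q th) (qe th)).
set (rt := fun th => if Req_EM_T th thl then 1 else r th).
assert (Eqt : forall th, th <> thl -> qt th = Rmin (q th) (qe th)).
{ intros th h. unfold qt. destruct (Req_EM_T th thl); [contradiction|auto]. }
assert (Ert : forall th, th <> thl -> rt th = r th).
{ intros th h. unfold rt. destruct (Req_EM_T th thl); [contradiction|auto]. }
assert (Eqtl : qt thl = qe thl).
{ unfold qt. destruct (Req_EM_T thl thl); [auto|contradiction]. }
assert (Ertl : rt thl = 1).
{ unfold rt. destruct (Req_EM_T thl thl); [auto|contradiction]. }
clearbody qt rt.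
assert (Hxt : forall p, inTheta thl thh p -> p <> thl -> qt p * rt p = Rmin (q p * r p) (qe p)).
{ intros p Hp h. rewrite Eqt, Ert by auto.
  destruct (Hcl p Hp) as [[A [B C]]|[A [B C]]].
  - rewrite C, !Rmult_1_r. auto.
  - rewrite Rmin_left by auto. rewrite Rmin_left; auto. nra. }
assert (Hxnn : forall p, inTheta thl thh p -> 0 <= q p * r p).
{ intros p Hp. destruct (Hmech p Hp) as [A [B _]]. nra. }
assert (X0 : forall p, inTheta thl thh p -> 0 <= qt p * rt p <= qbar).
{ intros p Hp. destruct (Req_dec p thl) as [E|E].
  - subst. rewrite Eqtl, Ertl. destruct (Hqe thl Thl). lra.
  - rewrite Hxt by auto. destruct (Hqe p Hp). specialize (Hxnn p Hp).
    unfold Rmin; destruct Rle_dec; lra. }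
assert (X1 : forall p p', inTheta thl thh p -> inTheta thl thh p' -> p <= p' -> qt p' * rt p' <= qt p * rt p).
{ intros p p' Hp Hp' Hpp. destruct (Req_dec p' thl) as [E'|E'].
  - assert (p = p') by (unfold inTheta in *; lra). subst; lra.
  - rewrite (Hxt p') by auto. destruct (Req_dec p thl) as [E|E].
    + subst. rewrite Eqtl, Ertl. specialize (Hqemono thl p' Thl Hp' Hpp).
      pose proof (Rmin_r (q p' * r p') (qe p')). lra.
    + rewrite Hxt by auto. specialize (Hqemono p p' Hp Hp' Hpp).
      specialize (Hxmono p p' Hp Hp' Hpp).
      unfold Rmin; repeat destruct Rle_dec; lra. }
assert (X2 : forall p, inTheta thl thh p -> p <> thl -> qt p * rt p <= q p * r p).
{ intros p Hp h. rewrite Hxt by auto. apply Rmin_l. }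
destruct (construct_u thl thh qbar (fun p => qt p * rt p) ltac:(lra) ltac:(lra) X0 X1)
  as [ut [UIC [UIR [Uh Umin]]]].
assert (Ule : forall a, inTheta thl thh a -> ut a <= u a).
{ apply Umin.
  - intros a Ha. apply HIR; auto.
  - intros a p Ha Hp Hap. pose proof (HIC a p Ha Hp).
    assert (p <> thl) by (unfold inTheta in *; lra).
    specialize (X2 p Hp H0). nra. }
assert (G : forall th, inTheta thl thh th ->
   rt th * TS P c th (qt th) >= r th * TS P c th (q th) /\
   ((th = thl /\ q th <> qe th) \/ q th > qe th -> rt th * TS P c th (qt th) > r th * TS P c th (q th))).
{ intros th Hth'. destruct (Hmech th Hth') as [Hr [Hq _]].
  destruct (Hqe th Hth') as [Bq Pe]. specialize (Hqepos th Hth'). specialize (HTSqe th Hth').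
  destruct (Req_dec th thl) as [E|E].
  - subst th. rewrite Eqtl, Ertl, Rmult_1_l.
    destruct (Req_dec (q thl) 0) as [Z|Z].
    + rewrite Z, TS0. split; intros; lra.
    + destruct (Req_dec (q thl) (qe thl)) as [Z'|Z'].
      * rewrite Z'. split; [nra|]. intros [[_ h]|h]; lra.
      * pose proof (TSmax P qbar HPcont HPdec thl (qe thl) (q thl) ltac:(lra) Pe ltac:(lra) Z').
        assert (TS P c thl (q thl) < TS P c thl (qe thl)) by (rewrite !TSpos by lra; lra).
        destruct (Rle_lt_dec 0 (TS P c thl (q thl))); split; [nra| intros _; nra | nra | intros _; nra].
  - rewrite Eqt, Ert by auto.
    destruct (Hcl th Hth') as [[A [B C]]|[A [B C]]].
    + rewrite C. destruct (Rle_lt_dec (q th) (qe th)) as [h|h].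
      * rewrite Rmin_left by auto. split; [lra|]. intros [[h1 _]|h1]; [contradiction|lra].
      * rewrite Rmin_right by lra.
        pose proof (TSmax P qbar HPcont HPdec th (qe th) (q th) ltac:(lra) Pe ltac:(lra) ltac:(lra)).
        assert (TS P c th (q th) < TS P c th (qe th)) by (rewrite !TSpos by lra; lra).
        split; intros; lra.
    + rewrite Rmin_left by auto. split; [lra|]. intros [[h1 _]|h1]; [contradiction|lra]. }
exists rt, qt, ut.
split; [|split; [|split; [|split; [|split; [|split]]]]].
- assert (Part : forall th, inTheta thl thh th ->
     (qt th >= qhat /\ rt th = 1) \/ (qt th = qhat /\ 0 < rt th < 1) \/ (qt th = 0 /\ rt th = 0)).
  { intros th Hth'. destruct (Req_dec th thl) as [E|E].
    - subst. rewrite Eqtl, Ertl. left. specialize (Hqhqe' thl Thl). lra.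
    - rewrite Eqt, Ert by auto. specialize (Hqhqe' th Hth').
      destruct (Cov th Hth') as [h|[h|h]].
      + left. destruct (V1 th h). split; auto. unfold Rmin; destruct Rle_dec; lra.
      + right; left. destruct (V01 th h) as [A B]. rewrite A, Rmin_left by lra. auto.
      + right; right. destruct (V0 th h) as [A B]. rewrite A, Rmin_left by (specialize (Hqepos th Hth'); lra). auto. }
  split; [|split; [|split; [|split]]].
  + intros th Hth'. destruct (Hqe th Hth') as [Bq _]. destruct (Hmech th Hth') as [_ [Hq _]].
    assert (0 <= qt th <= qbar).
    { destruct (Req_dec th thl) as [E|E].
      - subst. rewrite Eqtl. destruct (Hqe thl Thl); lra.
      - rewrite Eqt by auto. unfold Rmin; destruct Rle_dec; lra. }
    destruct (Part th Hth') as [[A B]|[[A B]|[A B]]]; (split; [lra|split; [lra|split; intro; lra]]).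
  + intros a b Ha Hb. specialize (UIC a b Ha Hb). lra.
  + intros a Ha. apply UIR; auto.
  + exact Uh.
  + exists (fun th => inTheta thl thh th /\ (th = thl \/ S1 th)),
      (fun th => S01 th /\ th <> thl), (fun th => S0 th /\ th <> thl).
    split; [|split; [|split; [|split; [|split; [|split; [|split; [|split; [|split; [|split;
      [|split; [|split; [|split; [|split]]]]]]]]]]]]].
    * intros x y z [Hx Hx'] [Hz Hz'] Hxyz.
      assert (Hy : inTheta thl thh y) by (unfold inTheta in *; lra).
      split; auto. destruct (Req_dec y thl) as [E|E]; [left; auto|right].
      destruct Hz' as [Ez|Ez].
      { unfold inTheta in *; lra. }
      destruct (Cov y Hy) as [h|[h|h]]; auto.
      -- specialize (O2 y z h Ez). lra.
      -- specialize (O3 y z h Ez). lra.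
    * intros x y z [Hx Hx'] [Hz Hz'] Hxyz. split.
      -- apply (I01 x y z); auto.
      -- pose proof (D01 x Hx). unfold inTheta in *. lra.
    * intros x y z [Hx Hx'] [Hz Hz'] Hxyz. split.
      -- apply (I0 x y z); auto.
      -- pose proof (D0 x Hx). unfold inTheta in *. lra.
    * intros th [h _]; auto.
    * intros th [h _]; auto.
    * intros th [h _]; auto.
    * intros th Hth'. destruct (Req_dec th thl) as [E|E].
      -- left. split; auto.
      -- destruct (Cov th Hth') as [h|[h|h]]; [left; split; auto|right; left; split; auto|right; right; split; auto].
    * intros th [[_ [h|h]] [h' h'']]; [contradiction|exact (N1 th (conj h h'))].
    * intros th [[_ [h|h]] [h' h'']]; [contradiction|exact (N2 th (conj h h'))].
    * intros th [[h _] [h' _]]. exact (N3 th (conj h h')).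
    * intros x y [Hx _] [Hy _]. auto.
    * intros x y [Hx Hx'] [Hy [Ey|Ey]].
      -- pose proof (D01 x Hx). unfold inTheta in *. lra.
      -- auto.
    * intros th [Hth' [E|E]].
      -- subst. rewrite Eqtl, Ertl. specialize (Hqhqe' thl Thl). lra.
      -- destruct (Part th Hth') as [h|[[A B]|[A B]]]; auto.
         ++ destruct (Req_dec th thl) as [E'|E']; [subst; rewrite Ertl in B; lra|].
            rewrite Ert in B by auto. destruct (V1 th E). lra.
         ++ destruct (Req_dec th thl) as [E'|E']; [subst; rewrite Ertl in B; lra|].
            rewrite Ert in B by auto. destruct (V1 th E). lra.
    * intros th [h h']. rewrite Eqt, Ert by auto. destruct (V01 th h) as [A B].
      assert (qhat <= qe th) by (apply Hqhqe'; apply D01; auto).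
      rewrite A, Rmin_left by lra. lra.
    * intros th [h h']. rewrite Eqt, Ert by auto. destruct (V0 th h) as [A B].
      specialize (Hqepos th (D0 th h)). rewrite A, Rmin_left by lra. lra.
- split.
  + intros th Hth'. destruct (Req_dec th thl) as [E|E].
    * subst. rewrite Eqtl. lra.
    * rewrite Eqt by auto. apply Rmin_r.
  + auto.
- intros th Hth' h. rewrite Eqt by lra. apply Rmin_l.
- exact Ule.
- intros th Hth'. unfold RS. destruct (G th Hth') as [G1 _]. specialize (Ule th Hth'). nra.
- intros th Hth' Hgt. split.
  + intros h. rewrite Eqt by lra. rewrite Rmin_right by lra. auto.
  + unfold RS. destruct (G th Hth') as [_ G2]. specialize (G2 (or_intror Hgt)).
    specialize (Ule th Hth'). nra.
- intros Hne. unfold RS. destruct (G thl Thl) as [_ G2]. specialize (G2 (or_introl (conj eq_refl Hne))).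
  specialize (Ule thl Thl). nra.
Qed.
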